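(* Let $k\ge2$, $n\ge1$, $A=\{0<1<\cdots<k-1\}$, and let $v\in\Gamma_{k,n}$. Then the standard permutation $\pi(v)$ of $[k^{n}]$ is $\pi=\bigcup_{i=0}^{k-1}\pi_{i}$, a union of $k$ order-preserving injective partial maps with $\mathrm{dom}\,\pi_{i}=\{x\in[k^{n}]:\text{the first digit of the }n\text{-digit base-}k\text{ representation of }x\text{ is }i\}$ for $0\le i\le k-1$. The sets $\mathrm{ran}\,\pi_{i}$ partition $[k^{n}]$, and each $\mathrm{ran}\,\pi_{i}$ is a transversal of the partition of $[k^{n}]$ into the intervals $[jk,(j+1)k-1]$, $0\le j\le k^{n-1}-1$ (i.e. meets each such interval in exactly one point).
   Context: $[N]=\{0<1<\cdots<N-1\}$. $G\subseteq A^{k}$ is the set of words of length $k$ in which each letter of $A$ occurs exactly once, and $\Gamma_{k,n}=G^{k^{n-1}}$, the set of concatenations of $k^{n-1}$ words from $G$. Standard permutation of $w\in A^{N}$: let $f(w)$ be the letters of $w$ in nondecreasing order; for each letter $a$, $\pi_{a}$ is the unique order-preserving injective partial map on $[N]$ with domain the set of positions (from $0$) of $a$ in $f(w)$ and range the set of positions of $a$ in $w$; $\pi(w)=\bigcup_{a}\pi_{a}$. *)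

(* Defs.v *)
From mathcomp Require Import all_boot.
Set Implicit Arguments. Unset Strict Implicit. Unset Printing Implicit Defensive.

(* Words are sequences of naturals; the alphabet A = {0<1<...<k-1} is the set
   of naturals < k with the usual order. *)

Definition in_G (k : nat) (u : seq nat) : bool :=
  [&& size u == k, all (fun a => a < k) u
    & all (fun a => count_mem a u == 1) (iota 0 k)].

Definition in_Gamma (k n : nat) (v : seq nat) : Prop :=
  exists blocks : seq (seq nat),
    [/\ size blocks = k ^ n.-1, all (in_G k) blocks & v = flatten blocks].

(* f(w): the letters of w in nondecreasing order *)
Definition sortw (w : seq nat) : seq nat := sort leq w.

Definition positions (w : seq nat) (a : nat) : seq nat :=
  [seq i <- iota 0 (size w) | nth 0 w i == a].

(* pi_a : the order-preserving injective partial map on [N] with domain the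
   positions of a in f(w) and range the positions of a in w (both are
   increasing lists of the same length, so the map sends the r-th element of
   the domain to the r-th element of the range). *)
Definition std_piece (w : seq nat) (a : nat) (x : nat) : option nat :=
  if x \in positions (sortw w) a
  then Some (nth 0 (positions w a) (index x (positions (sortw w) a)))
  else None.

Definition std_perm (w : seq nat) (x y : nat) : Prop :=
  exists a, std_piece w a x = Some y.

Definition piece_ran (w : seq nat) (a y : nat) : Prop :=
  exists x, std_piece w a x = Some y.

(* first digit of the n-digit base-k representation of x (for x < k^n) *)
Definition first_digit (k n x : nat) : nat := x %/ k ^ n.-1.

(* Main.v *)
Require Import Defs.
From mathcomp Require Import all_boot.
From mathcomp Require Import zify.
Set Implicit Arguments. Unset Strict Implicit.

Lemma pos_mem w a y : (y \in positions w a) = (y < size w) && (nth 0 w y == a).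
Proof. by rewrite mem_filter mem_iota /= add0n andbC. Qed.

Lemma size_pos w a : size (positions w a) = count_mem a w.
Proof.
rewrite size_filter.
have -> : count_mem a w = count_mem a (mkseq (nth 0 w) (size w)) by rewrite mkseq_nth.
by rewrite /mkseq count_map; apply: eq_count => i.
Qed.

Lemma uniq_pos w a : uniq (positions w a).
Proof. exact/filter_uniq/iota_uniq. Qed.

Lemma piece_ranE w a y : piece_ran w a y <-> y \in positions w a.
Proof.
have eqsz : size (positions (sortw w) a) = size (positions w a).
  by rewrite !size_pos; apply/permP/permEl/perm_sort.
split.
- case=> x; rewrite /std_piece; case: ifP => // xP [<-].
  by apply: mem_nth; rewrite -eqsz index_mem.
- move=> yQ; exists (nth 0 (positions (sortw w) a) (index y (positions w a))).
  have hr : index y (positions w a) < size (positions (sortw w) a) by rewrite eqsz index_mem.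
  by rewrite /std_piece mem_nth // index_uniq ?uniq_pos // nth_index.
Qed.

Lemma inG_count k b a : in_G k b -> count_mem a b = (a < k).
Proof.
case/and3P=> _ /allP Hall /allP Hc.
case: (ltnP a k) => h.
  by apply/eqP; apply: Hc; rewrite mem_iota.
apply/count_memPn; apply/negP => /Hall; rewrite ltnNge h.
by [].
Qed.

Lemma inG_perm k b : in_G k b -> perm_eq b (iota 0 k).
Proof.
move=> H; rewrite /perm_eq; apply/allP => x _ /=; apply/eqP.
by rewrite (inG_count _ H) count_uniq_mem ?iota_uniq // mem_iota.
Qed.

Lemma flat_count k bs a : all (in_G k) bs -> count_mem a (flatten bs) = size bs * (a < k).
Proof.
elim: bs => //= b bs IH /andP [hb hbs].
by rewrite count_cat IH // (inG_count _ hb) mulSn.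
Qed.

Lemma flat_size k bs : all (in_G k) bs -> size (flatten bs) = size bs * k.
Proof.
elim: bs => //= b bs IH /andP [hb hbs].
rewrite size_cat IH //; case/and3P: hb => /eqP -> _ _; by rewrite mulSn.
Qed.

Lemma flat_nth k bs j p : all (in_G k) bs -> j < size bs -> p < k ->
  nth 0 (flatten bs) (j * k + p) = nth 0 (nth [::] bs j) p.
Proof.
elim: bs j => //= b bs IH j /andP [hb hbs] hj hp.
have sb : size b = k by case/and3P: hb => /eqP.
rewrite nth_cat sb; case: j hj => [|j] hj /=; first by rewrite mul0n add0n hp.
have -> : j.+1 * k + p < k = false by rewrite mulSn; lia.
have -> : j.+1 * k + p - k = j * k + p by rewrite mulSn; lia.
by apply: IH.
Qed.

Lemma count_div M a k : 0 < M ->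
  count (fun x => x %/ M == a) (iota 0 (k * M)) = M * (a < k).
Proof.
move=> M0; elim: k => [|k IH]; first by rewrite mul0n ltn0 muln0.
rewrite mulSn addnC iotaD count_cat IH add0n.
have H : {in iota (k * M) M, (fun x => x %/ M == a) =1 (fun _ => a == k)}.
  move=> x; rewrite mem_iota => /andP [h1 h2] /=.
  have -> : x = k * M + (x - k * M) by lia.
  rewrite divnMDl // divn_small ?addn0; last by lia.
  by rewrite eq_sym.
rewrite (eq_in_count H).
case: (ltngtP a k) => h.
- have -> : (a < k.+1) = true by lia.
  by rewrite count_pred0 addn0.
- have -> : (a < k.+1) = false by lia.
  by rewrite count_pred0 addn0.
- rewrite count_predT size_iota h ltnSn. lia.
Qed.

Lemma sortw_eq k M bs : 0 < M -> size bs = M -> all (in_G k) bs ->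
  sortw (flatten bs) = [seq x %/ M | x <- iota 0 (k * M)].
Proof.
move=> M0 sz H.
apply: (@sorted_eq _ leq leq_trans anti_leq).
- exact: sort_sorted leq_total _.
- apply: homo_sorted; last exact: iota_sorted.
  by move=> x y; apply: leq_div2r.
- apply: perm_trans (permEl (perm_sort _ _)) _.
  rewrite /perm_eq; apply/allP => a _ /=; apply/eqP.
  by rewrite (flat_count _ H) count_map count_div // sz mulnC.
Qed.

Unset Implicit Arguments.
Theorem lemma3p6 (k n : nat) (v : seq nat) :
  2 <= k -> 1 <= n -> in_Gamma k n v ->
  (* pi(v) is the union of pi_0, ..., pi_{k-1} *)
  (forall x y, std_perm v x y <-> exists2 i, i < k & std_piece v i x = Some y) /\
  (* domains *)
  (forall i, i < k -> forall x,
      std_piece v i x != None = (x < k ^ n) && (first_digit k n x == i)) /\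
  (* the ranges partition [k^n] *)
  (forall y, y < k ^ n <-> exists2 i, i < k & piece_ran v i y) /\
  (forall i j y, i < k -> j < k -> piece_ran v i y -> piece_ran v j y -> i = j) /\
  (* each range is a transversal of the intervals [jk, (j+1)k - 1] *)
  (forall i, i < k -> forall j, j < k ^ n.-1 ->
      exists! y, j * k <= y < j.+1 * k /\ piece_ran v i y).
Proof.
move=> k2 n1 [bs [sz H ->]].
set M := k ^ n.-1.
have M0 : 0 < M by rewrite expn_gt0; lia.
have kn : k ^ n = M * k by rewrite /M -expnSr; case: (n) n1.
have szv : size (flatten bs) = k ^ n by rewrite (flat_size H) sz kn.
have allv : forall y, y < k ^ n -> nth 0 (flatten bs) y < k.
  move=> y hy; have : nth 0 (flatten bs) y \in flatten bs by rewrite mem_nth // szv.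
  case/flattenP => b hb hyb.
  by case/and3P: (allP H b hb) => _ /allP A _; apply: A.
have ranE : forall i y, piece_ran (flatten bs) i y <->
    (y < k ^ n) && (nth 0 (flatten bs) y == i).
  by move=> i y; rewrite piece_ranE pos_mem szv.
split.
  move=> x y; split; last by case=> i _ h; exists i.
  case=> a h; exists a => //.
  have : piece_ran (flatten bs) a y by exists x.
  by case/ranE => /andP [hy /eqP <-]; apply: allv.
split.
  move=> i ik x; rewrite /std_piece.
  rewrite (sortw_eq M0 sz H) pos_mem size_map size_iota.
  case: ifP => h /=.
    move/andP: h => [h1 h2]; rewrite kn mulnC h1 /first_digit -/M /=.
    by rewrite (nth_map 0) ?size_iota // nth_iota // add0n in h2.
  apply/esym/negbTE/negP => /andP [h1 h2]; move: h.
  rewrite kn mulnC in h1; rewrite h1 (nth_map 0) ?size_iota // nth_iota // add0n.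
  by rewrite /first_digit -/M in h2; rewrite h2.
split.
  move=> y; split.
    move=> hy; exists (nth 0 (flatten bs) y); first exact: allv.
    by apply/ranE; rewrite hy eqxx.
  by case=> i _ /ranE /andP [].
split.
  by move=> i j y _ _ /ranE /andP [_ /eqP <-] /ranE /andP [_ /eqP <-].
move=> i ik j hj.
have hjs : j < size bs by rewrite sz.
set b := nth [::] bs j.
have hb : in_G k b by apply: (allP H); rewrite mem_nth.
have sb : size b = k by case/and3P: hb => /eqP.
have ub : uniq b by rewrite (perm_uniq (inG_perm hb)) iota_uniq.
have ib : i \in b by rewrite -has_pred1 has_count (inG_count _ hb) ik.
exists (j * k + index i b); split.
  split; first by have := index_mem i b; rewrite ib sb mulSn; lia.
  apply/ranE; rewrite flat_nth // ?nth_index // ?eqxx ?andbT; last by rewrite -sb index_mem.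
  have := index_mem i b; rewrite ib sb kn => h.
  have : j.+1 * k <= M * k by rewrite leq_mul2r; lia.
  rewrite mulSn; lia.
move=> y [/andP [h1 h2] /ranE /andP [hy /eqP hn]].
have hp : y - j * k < k by rewrite mulSn in h2; lia.
have ey : y = j * k + (y - j * k) by lia.
rewrite ey in hn *; congr (_ + _).
rewrite (flat_nth H) // -/b in hn.
by rewrite -hn index_uniq // sb.
Qed.
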